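(* Let $G=A_\Gamma$ be a large even Artin group, let $r\in V$ be a vertex, and let $G_1=A_{\Gamma\setminus\{r\}}$, viewed as the subgroup of $G$ generated by $V\setminus\{r\}$. If $g\in G_1$ satisfies $g^{-1}rg=r$, then $g=1$.
   Context: $A_\Gamma=\langle V\mid {}_{m_e}(uv)={}_{m_e}(vu),\ e=\{u,v\}\in E\rangle$ for a finite simple labelled graph $\Gamma$ with vertex set $V$, where ${}_m(uv)$ is the alternating product $uvu\cdots$ of length $m$; even means all labels are even, large means all labels are $\ge 3$. $\Gamma\setminus\{r\}$ is the full labelled subgraph on $V\setminus\{r\}$. *)

(* Defs.v *)
(* Artin groups given by presentations, encoded as words in
   the free monoid on V x {+1,-1} modulo the congruence generated by free
   cancellation and the Artin relations. *)
From mathcomp Require Import all_boot.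
From Stdlib Require Import Relations.Relation_Operators.
Set Implicit Arguments. Unset Strict Implicit. Unset Printing Implicit Defensive.

(* A letter (x, true) is the generator x, (x, false) is x^-1. *)
Definition word (V : Type) := seq (V * bool).

(* Labelled graph: m u v = 0 means no edge between u and v; otherwise
   {u,v} is an edge with label m u v. *)
Definition is_labelled_graph (V : finType) (m : V -> V -> nat) : Prop :=
  (forall u v, m u v = m v u) /\ (forall u, m u u = 0) /\
  (forall u v, m u v != 0 -> 2 <= m u v).

Definition is_edge (V : finType) (m : V -> V -> nat) (u v : V) : bool :=
  m u v != 0.

Definition large_even (V : finType) (m : V -> V -> nat) : Prop :=
  forall u v, is_edge m u v -> 3 <= m u v /\ ~~ odd (m u v).

Definition alt (V : Type) (n : nat) (u v : V) : word V :=
  mkseq (fun i => (if odd i then v else u, true)) n.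

Definition winv (V : Type) (w : word V) : word V :=
  rev (map (fun l => (l.1, ~~ l.2)) w).

Inductive artin_rule (V : finType) (m : V -> V -> nat) : word V -> word V -> Prop :=
  | rule_cancel (x : V) (b : bool) : artin_rule m [:: (x, b); (x, ~~ b)] [::]
  | rule_braid (u v : V) : is_edge m u v -> artin_rule m (alt (m u v) u v) (alt (m u v) v u).

Inductive artin_step (V : finType) (m : V -> V -> nat) : word V -> word V -> Prop :=
  | step_ctx (w1 w2 l r : word V) :
      artin_rule m l r -> artin_step m (w1 ++ l ++ w2) (w1 ++ r ++ w2).

Definition artin_eq (V : finType) (m : V -> V -> nat) : word V -> word V -> Prop :=
  clos_refl_sym_trans (word V) (artin_step m).

(* Main.v *)
Require Import Defs.
From mathcomp Require Import all_boot.
From Stdlib Require Import Relations.Relation_Operators.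
Set Implicit Arguments. Unset Strict Implicit. Unset Printing Implicit Defensive.

Section Proj.
Variables (V : finType) (m : V -> V -> nat) (r : V) (K : V -> nat) (N i : nat).
Hypothesis hKN : forall x, K x %| N.

Definition T c (x : V) := K x %| c + i.

Fixpoint proj (c : nat) (w : word V) : word V :=
  match w with
  | [::] => [::]
  | l :: w' => if l.1 == r then proj (if l.2 then c.+1 else c + N.-1) w'
               else (if T c l.1 then [:: l] else [::]) ++ proj c w'
  end.

Fixpoint shift (c : nat) (w : word V) : nat :=
  match w with
  | [::] => c
  | l :: w' => if l.1 == r then shift (if l.2 then c.+1 else c + N.-1) w'
               else shift c w'
  end.

Lemma proj_cat c w1 w2 : proj c (w1 ++ w2) = proj c w1 ++ proj (shift c w1) w2.
Proof. elim: w1 c => [|l w IH] c //=; case: ifP => _; rewrite IH ?catA //. Qed.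

Lemma shift_cat c w1 w2 : shift c (w1 ++ w2) = shift (shift c w1) w2.
Proof. elim: w1 c => [|l w IH] c //=; case: ifP => _; rewrite IH //. Qed.

Lemma mod_step c c' (b : bool) : c = c' %[mod N] ->
  (if b then c.+1 else c + N.-1) = (if b then c'.+1 else c' + N.-1) %[mod N].
Proof. move=> H; case: b; last by rewrite -modnDml H modnDml.
by rewrite -[c.+1]addn1 -[c'.+1]addn1 -modnDml H modnDml.
Qed.

Lemma T_mod c c' x : c = c' %[mod N] -> T c x = T c' x.
Proof.
move=> H; rewrite /T /dvdn.
have E : (c + i) %% N = (c' + i) %% N by rewrite -modnDml H modnDml.
by rewrite -(modn_dvdm (c + i) (hKN x)) E (modn_dvdm _ (hKN x)).
Qed.

Lemma proj_mod w c c' : c = c' %[mod N] -> proj c w = proj c' w.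
Proof.
elim: w c c' => [|l w IH] c c' H //=; case: ifP => _.
  by apply: IH; apply: mod_step.
by rewrite (T_mod _ H) (IH c c').
Qed.

Lemma shift_mod w c c' : c = c' %[mod N] -> shift c w = shift c' w %[mod N].
Proof.
elim: w c c' => [|l w IH] c c' H //=; case: ifP => _; last exact: IH.
by apply: IH; apply: mod_step.
Qed.

Lemma proj_nor w c : all (fun l => l.1 != r) w ->
  proj c w = filter (fun l => T c l.1) w.
Proof.
elim: w => [|l w IH] //=.
move=> /andP[/negbTE -> /IH ->]; by case: ifP.
Qed.

Lemma shift_nor w c : all (fun l => l.1 != r) w -> shift c w = c.
Proof. elim: w => [|l w IH] //= /andP[/negbTE -> /IH ->] //. Qed.

Lemma alt2 n (u v : V) : alt n.+2 u v = (u, true) :: (v, true) :: alt n u v.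
Proof.
rewrite /alt /mkseq /= -[2]/(2 + 0) iotaDl -map_comp; congr (_ :: _ :: _).
apply: eq_map => j /=.
by rewrite negbK add0n.
Qed.

Lemma alt_all n u v : u != r -> v != r -> all (fun l => l.1 != r) (alt n u v).
Proof. move=> hu hv; rewrite /alt /mkseq all_map; apply/allP => j _ /=; by case: odd. Qed.

Lemma filter_alt k c u v : ~~ (T c u && T c v) ->
  filter (fun l => T c l.1) (alt k.*2 u v) = filter (fun l => T c l.1) (alt k.*2 v u).
Proof.
move=> H; elim: k => [|k IH]; first by [].
rewrite doubleS !alt2 /= IH.
by case: (T c u) (T c v) H => [] [].
Qed.

Section V1.
Variable v : V.
Hypothesis hv : v != r.

Lemma proj_vr k c : proj c (alt k.*2 v r) =
  nseq (count (fun j => T j v) (iota c k)) (v, true).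
Proof.
elim: k c => [|k IH] c; first by []. rewrite doubleS alt2 /= (negbTE hv) eqxx IH.
by case: ifP.
Qed.

Lemma proj_rv k c : proj c (alt k.*2 r v) =
  nseq (count (fun j => T j v) (iota c.+1 k)) (v, true).
Proof.
elim: k c => [|k IH] c; first by []. rewrite doubleS alt2 /= (negbTE hv) eqxx IH.
by case: ifP.
Qed.

Lemma shift_vr k c : shift c (alt k.*2 v r) = c + k.
Proof. elim: k c => [|k IH] c; first by rewrite /= addn0.
rewrite doubleS alt2 /= (negbTE hv) eqxx IH; by rewrite addSnnS. Qed.

Lemma shift_rv k c : shift c (alt k.*2 r v) = c + k.
Proof. elim: k c => [|k IH] c; first by rewrite /= addn0.
rewrite doubleS alt2 /= (negbTE hv) eqxx IH; by rewrite addSnnS. Qed.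

Lemma count_shift c : 
  count (fun j => T j v) (iota c.+1 (K v)) = count (fun j => T j v) (iota c (K v)).
Proof.
have E1 : iota c (K v).+1 = c :: iota c.+1 (K v) by [].
have E2 : iota c (K v).+1 = iota c (K v) ++ [:: c + K v] by rewrite -addn1 iotaD.
have := congr1 (count (fun j => T j v)) (etrans (esym E1) E2).
rewrite count_cat /= addn0 /T.
rewrite -addnA (addnC (K v)) addnA (dvdn_addl _ (dvdnn (K v))).
by move/eqP; rewrite addnC eqn_add2r => /eqP.
Qed.

Lemma proj_braid_r c : proj c (alt (K v).*2 r v) = proj c (alt (K v).*2 v r).
Proof. by rewrite proj_vr proj_rv count_shift. Qed.

Lemma shift_braid_r c : shift c (alt (K v).*2 r v) = shift c (alt (K v).*2 v r).
Proof. by rewrite shift_vr shift_rv. Qed.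
End V1.

Lemma eq_ctx a b u w : artin_eq m a b -> artin_eq m (u ++ a ++ w) (u ++ b ++ w).
Proof.
elim => [x y H | x | x y _ IH | x y z _ IH1 _ IH2].
- apply: rst_step; case: H => w1 w2 l l' R.
  have := step_ctx (u ++ w1) (w2 ++ w) R; by rewrite -!catA.
- exact: rst_refl.
- exact: rst_sym.
- exact: rst_trans IH2.
Qed.

Hypothesis msym : forall u v, m u v = m v u.
Hypothesis mrr : m r r = 0.
Hypothesis hK : forall v, is_edge m r v -> m r v = (K v).*2.
Hypothesis hN : 0 < N.
Hypothesis hev : forall u v, is_edge m u v -> ~~ odd (m u v).

Lemma rule_inv l l' : artin_rule m l l' -> forall c,
  artin_eq m (proj c l) (proj c l') /\ shift c l = shift c l' %[mod N].
Proof.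
case => [x b | u v huv] c.
- rewrite /=; case: eqP => [_|_].
    split; first exact: rst_refl.
    case: b => /=.
      by rewrite addSnnS prednK // modnDr.
    by rewrite -addnS prednK // modnDr.
  split=> //; rewrite cats0; case: ifP => _; last exact: rst_refl.
  apply: rst_step; have := step_ctx [::] [::] (rule_cancel m x b); by rewrite /=.
- case: (eqVneq u r) => [Eu|hu].
    subst u; have hv : v != r by apply/eqP => Ev; move: huv; rewrite Ev /is_edge mrr.
    rewrite (hK huv) proj_braid_r // shift_braid_r //; split=> //; exact: rst_refl.
  case: (eqVneq v r) => [Ev|hv].
    subst v; have hu' : is_edge m r u by rewrite /is_edge msym.
    rewrite msym (hK hu') proj_braid_r // shift_braid_r //; split=> //; exact: rst_refl.
  rewrite !proj_nor ?alt_all // !shift_nor ?alt_all //; split=> //.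
  case E: (T c u && T c v).
  2: { have Em : m u v = (m u v)./2.*2.
         by rewrite -{1}(odd_double_half (m u v)) (negbTE (hev huv)).
       by rewrite Em filter_alt ?E //; exact: rst_refl. }
  move/andP: E => [Tu Tv].
  rewrite !(@eq_in_filter _ _ predT) ?filter_predT.
  + apply: rst_step; have := step_ctx [::] [::] (rule_braid huv); by rewrite /= !cats0.
  + move=> l0; rewrite /alt /mkseq => /mapP[j _ ->] /=; by case: odd.
  + move=> l0; rewrite /alt /mkseq => /mapP[j _ ->] /=; by case: odd.
Qed.

Lemma proj_inv w w' : artin_eq m w w' -> forall c, artin_eq m (proj c w) (proj c w').
Proof.
elim => [x y H | x | x y _ IH | x y z _ IH1 _ IH2] c.
- case: H => w1 w2 l l' R.
  rewrite !proj_cat.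
  have [H1 H2] := rule_inv R (shift c w1).
  rewrite (proj_mod _ H2); exact: eq_ctx.
- exact: rst_refl.
- exact: rst_sym (IH c).
- exact: rst_trans (IH1 c) (IH2 c).
Qed.
End Proj.

From mathcomp Require Import zify.

Theorem lemma4p10 (V : finType) (m : V -> V -> nat) (r : V) (g : word V) :
  is_labelled_graph m -> large_even m ->
  (* g lies in G_1 = subgroup generated by V \ {r} *)
  all (fun l => l.1 != r) g ->
  artin_eq m (winv g ++ [:: (r, true)] ++ g) [:: (r, true)] ->
  artin_eq m g [::].
Proof.
move=> [msym [mdiag _]] Hle Hg H.
pose K x := if is_edge m r x then (m r x)./2 else 2.
pose N := \prod_(x : V) K x.
have hev : forall u v, is_edge m u v -> ~~ odd (m u v) by move=> u v /Hle[].
have hK : forall v, is_edge m r v -> m r v = (K v).*2.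
  move=> v e; rewrite /K e -{1}(odd_double_half (m r v)) (negbTE (hev _ _ e)) //.
have K2 : forall x, 2 <= K x.
  move=> x; rewrite /K; case: ifP => // e.
  have := Hle _ _ e => -[h3 _]; move: h3; rewrite (hK _ e) /K e.
  move: ((m r x)./2) => h; lia.
have hKN : forall x, K x %| N by move=> x; rewrite /N (bigD1 x) //= dvdn_mulr.
have hN : 0 < N by apply: prodn_gt0 => x; have := K2 x; lia.
have := proj_inv (N.-1) hKN msym (mdiag r) hK hN hev H 0.
have Hwg : all (fun l => l.1 != r) (winv g) by rewrite /winv all_rev all_map.
rewrite proj_cat (shift_nor _ _ Hwg) /= eqxx /= (proj_nor _ _ _ _ Hwg) (proj_nor _ _ _ _ Hg).
rewrite (@eq_in_filter _ _ pred0) ?filter_pred0; last first.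
  move=> l _ /=; rewrite /T add0n; apply/negP => d.
  have : K l.1 %| N.-1 + 1 by rewrite addn1 prednK.
  rewrite (dvdn_addr _ d) dvdn1 => /eqP E; have := K2 l.1; by rewrite E.
rewrite (@eq_in_filter _ _ predT) ?filter_predT //.
move=> l _ /=; rewrite /T add1n prednK //.
exact: hKN.
Qed.
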